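(* Let $(V,\mathcal{E})$ be a forward or backward neutral genealogy model and let $\sigma\in\mathcal{P}$ be uniform and independent of $\mathcal{E}$. Then: 1. $\sigma(\mathcal{E})$ is completely neutral. 2(a). If $(V,\mathcal{E})$ is forward neutral, then for each $n$, $(\sigma(\mathcal{E}_m))_{m\ge n}$ is independent of $(\sigma_m)_{m\le n}$. 2(b). If $(V,\mathcal{E})$ is backward neutral, then for each $n$, $(\sigma(\mathcal{E}_m))_{m<n}$ is independent of $(\sigma_m)_{m\ge n}$.
   Context: Data: $\tau\in\mathbb{N}\cup\{\infty\}$, positive integers $(X_n)_{n<\tau}$, vectors $k_n=(k_n(i))_{i=1}^{X_n}$ of nonnegative integers with $\sum_ik_n(i)=X_{n+1}$. $V_n=\{(n,i):1\le i\le X_n\}$, $V=\bigcup_nV_n$. A genealogy model is a random edge set $\mathcal{E}\subset\bigcup_nV_n\times V_{n+1}$ such that each vertex of $V_{n+1}$ has exactly one parent in $V_n$ and the out-degrees in $V_n$ are a permutation of $k_n$. $\mathcal{E}_n=\mathcal{E}\cap(V_n\times V_{n+1})$, $K_n=(\mathrm{od}((n,i)))_i$, $\Xi_n$ = partition of $V_{n+1}$ into sets of vertices with a common parent. Forward neutral: for all $n$, $K_n$ is exchangeable and independent of $(\mathcal{E}_m)_{m<n}$. Backward neutral: for all $n$, $\Xi_n$ is exchangeable (its law is invariant under relabelling $V_{n+1}$ by any fixed permutation) and independent of $(\mathcal{E}_m)_{m>n}$. $\mathcal{E}_n$ is exchangeable if $\mathcal{E}_n$ has the same law as $\{(\pi(v),\pi'(w)):(v,w)\in\mathcal{E}_n\}$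 for every fixed permutation $\pi$ of $V_n$ and $\pi'$ of $V_{n+1}$. $\mathcal{E}$ is completely neutral if $(\mathcal{E}_n)_n$ are independent and each is exchangeable. $\mathcal{P}$ is the set of permutations of $V$ mapping each $V_n$ to itself, written $\sigma=(\sigma_n)$ with $\sigma_n=\sigma|_{V_n}$; $\sigma$ is uniform if the $\sigma_n$ are independent uniform permutations. $\sigma(E)=\{(\sigma(v),\sigma(w)):(v,w)\in E\}$, and $\sigma(\mathcal{E}_m)=\{(\sigma_m(v),\sigma_{m+1}(w)):(v,w)\in\mathcal{E}_m\}$. *)

(* Defs.v *)
From HB Require Import structures.
From mathcomp Require Import all_boot all_order all_algebra.
From mathcomp Require Import fingroup perm.
From mathcomp Require Import all_classical all_reals all_analysis.

Set Implicit Arguments.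
Unset Strict Implicit.
Unset Printing Implicit Defensive.

Import Order.TTheory GRing.Theory Num.Theory.

(* tau : option nat, None = infinity; lt_tau tau n  <->  n < tau *)
Definition lt_tau (tau : option nat) (n : nat) : bool :=
  if tau is Some t then (n < t)%N else true.

(* generation n has vertices 'I_(X n)  (vertex (n,i) <-> ordinal i-1) *)
Definition edges (X : nat -> nat) (n : nat) := {set 'I_(X n) * 'I_(X n.+1)}.

Definition parent_unique (X : nat -> nat) (n : nat) (e : edges X n) : Prop :=
  forall w : 'I_(X n.+1), #|[set v | (v, w) \in e]| = 1%N.

Definition outdeg (X : nat -> nat) (n : nat) (e : edges X n)
  : {ffun 'I_(X n) -> nat} := [ffun v => #|[set w | (v, w) \in e]|].

Definition offspring_ok (X : nat -> nat) (k : forall n, 'I_(X n) -> nat)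
  (n : nat) (e : edges X n) : Prop :=
  exists pi : {perm 'I_(X n)}, forall v, outdeg e v = k n (pi v).

Definition sibship (X : nat -> nat) (n : nat) (e : edges X n)
  : {set {set 'I_(X n.+1)}} :=
  [set [set w | (v, w) \in e] | v : 'I_(X n)] :\ finset.set0.

Definition relabel_edges (X : nat -> nat) (n : nat) (p : {perm 'I_(X n)})
  (q : {perm 'I_(X n.+1)}) (e : edges X n) : edges X n :=
  [set (p x.1, q x.2) | x in e].

Definition relabel_part (m : nat) (q : {perm 'I_m}) (B : {set {set 'I_m}})
  : {set {set 'I_m}} := finset.imset (fun b : {set 'I_m} => finset.imset q (mem b)) (mem B).

Section Prob.
Context (d : measure_display) (Omega : measurableType d) (R : realType)
  (P : probability Omega R).
Local Open Scope classical_set_scope.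
Local Open Scope ereal_scope.

(* events of the form {Y_i = y_i for all i in s}, s a finite list of indices in A;
   they generate sigma((Y_i)_{i in A}) and form a pi-system *)
Definition fdd_events (T : nat -> Type) (Y : forall i, Omega -> T i)
  (A : pred nat) : set (set Omega) :=
  [set B | exists (s : seq nat) (y : forall i, T i),
     all A s /\ B = [set w | forall i, i \in s -> Y i w = y i]].

Definition indep_fam (F G : set (set Omega)) : Prop :=
  forall a b, F a -> G b -> P (a `&` b) = P a * P b.

Definition mutually_indep (T : nat -> Type) (Y : forall i, Omega -> T i)
  (A : pred nat) : Prop :=
  forall (s : seq nat) (y : forall i, T i), uniq s -> all A s ->
    P [set w | forall i, i \in s -> Y i w = y i] =
    \prod_(i <- s) P [set w | Y i w = y i].

Definition discrete_rv (T : nat -> Type) (Y : forall i, Omega -> T i)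
  (A : pred nat) : Prop :=
  forall i, A i -> forall t : T i, measurable [set w | Y i w = t].

Definition valid_edge (tau : option nat) : pred nat :=
  fun n => lt_tau tau n.+1.

Definition genealogy_model (tau : option nat) (X : nat -> nat)
  (k : forall n, 'I_(X n) -> nat) (E : forall n, Omega -> edges X n) : Prop :=
  forall n w, lt_tau tau n.+1 -> parent_unique (E n w) /\ offspring_ok k (E n w).

Definition forward_neutral (tau : option nat) (X : nat -> nat)
  (E : forall n, Omega -> edges X n) : Prop :=
  forall n, lt_tau tau n.+1 ->
    (forall (pi : {perm 'I_(X n)}) (f : {ffun 'I_(X n) -> nat}),
       P [set w | outdeg (E n w) = f] =
       P [set w | outdeg (E n w) = [ffun i => f (pi i)]]) /\
    indep_fam
      (fdd_events (T := fun i => {ffun 'I_(X i) -> nat})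
                  (fun i w => outdeg (E i w)) (pred1 n))
      (fdd_events E (fun m => (m < n)%N)).

Definition backward_neutral (tau : option nat) (X : nat -> nat)
  (E : forall n, Omega -> edges X n) : Prop :=
  forall n, lt_tau tau n.+1 ->
    (forall (pi : {perm 'I_(X n.+1)}) (B : {set {set 'I_(X n.+1)}}),
       P [set w | sibship (E n w) = B] =
       P [set w | sibship (E n w) = relabel_part pi B]) /\
    indep_fam
      (fdd_events (T := fun i => {set {set 'I_(X i.+1)}})
                  (fun i w => sibship (E i w)) (pred1 n))
      (fdd_events E (fun m => (n < m)%N && lt_tau tau m.+1)).

Definition completely_neutral (tau : option nat) (X : nat -> nat)
  (E : forall n, Omega -> edges X n) : Prop :=
  mutually_indep E (valid_edge tau) /\
  forall n, lt_tau tau n.+1 ->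
    forall (p : {perm 'I_(X n)}) (q : {perm 'I_(X n.+1)}) (e : edges X n),
      P [set w | E n w = e] = P [set w | E n w = relabel_edges p q e].

Definition uniform_perms (tau : option nat) (X : nat -> nat)
  (sigma : forall n, Omega -> {perm 'I_(X n)}) : Prop :=
  mutually_indep sigma (lt_tau tau) /\
  forall n, lt_tau tau n -> forall p : {perm 'I_(X n)},
    P [set w | sigma n w = p] = ((X n)`!%:R)^-1%:E.

End Prob.

Definition perm_edges d (Omega : measurableType d) (X : nat -> nat)
  (sigma : forall n, Omega -> {perm 'I_(X n)})
  (E : forall n, Omega -> edges X n) : forall n, Omega -> edges X n :=
  fun m w => relabel_edges (sigma m w) (sigma m.+1 w) (E m w).

(* Main.v *)
Require Import Defs.
From HB Require Import structures.
From mathcomp Require Import all_boot all_order all_algebra.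
From mathcomp Require Import fingroup perm.
From mathcomp Require Import all_classical all_reals all_analysis.
Set Implicit Arguments.
Unset Strict Implicit.
Unset Printing Implicit Defensive.
Import Order.TTheory GRing.Theory Num.Theory.
Section Comb.
Variables (X : nat -> nat) (n : nat).
Local Notation ed := (edges X n).
Implicit Types (b e : ed) (p : {perm 'I_(X n)}) (q : {perm 'I_(X n.+1)}).

Lemma mem_rel (p : {perm 'I_(X n)}) (q : {perm 'I_(X n.+1)}) (e : ed) x y :
  ((x, y) \in relabel_edges p q e) = (((p^-1)%g x, (q^-1)%g y) \in e).
Proof.
rewrite /relabel_edges.
have -> : (x, y) = (fun z : 'I_(X n) * 'I_(X n.+1) => (p z.1, q z.2)) ((p^-1)%g x, (q^-1)%g y).
  by rewrite /= !permKV.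
rewrite mem_imset //.
by move=> [a b] [c d] /= [/perm_inj -> /perm_inj ->].
Qed.

Lemma rel_comp p1 q1 p2 q2 e :
  relabel_edges p1 q1 (relabel_edges p2 q2 e) = relabel_edges (p2 * p1)%g (q2 * q1)%g e.
Proof. by apply/setP => -[x y]; rewrite !mem_rel !invMg !permM. Qed.

Lemma rel_id e : relabel_edges 1%g 1%g e = e.
Proof. by apply/setP => -[x y]; rewrite !mem_rel !invg1 !perm1. Qed.

Lemma rel_inj p q : injective (relabel_edges p q).
Proof.
move=> e1 e2 H.
by rewrite -(rel_id e1) -(rel_id e2) -(mulgV p) -(mulgV q) -!rel_comp H.
Qed.

Definition pub e := [forall w, #|[set v | (v, w) \in e]| == 1].

Lemma pubP e : reflect (parent_unique e) (pub e).
Proof.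
apply: (iffP forallP) => H w; first by apply/eqP; exact: H.
by apply/eqP; exact: H.
Qed.

Definition pk e (w : 'I_(X n.+1)) := [pick u | (u, w) \in e].

Lemma pu_pick e : pub e -> forall v w, (pk e w == Some v) = ((v, w) \in e).
Proof.
move=> /forallP H v w; move: (H w) => /cards1P [v0 Hs].
have Hm u : ((u, w) \in e) = (u == v0).
  by move/setP: Hs => /(_ u); rewrite !inE.
rewrite /pk; case: pickP => [u Hu|H0].
  have -> : u = v0 by apply/eqP; rewrite -Hm.
  by rewrite Hm; apply/eqP/eqP => [[->]|->].
by move: (H0 v0); rewrite Hm eqxx.
Qed.

Lemma pu_ex e : pub e -> forall w, exists v, pk e w = Some v.
Proof.
move=> /[dup] He /forallP H w; move: (H w) => /cards1P [v0 Hs].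
exists v0; apply/eqP; rewrite pu_pick //.
by move/setP: Hs => /(_ v0); rewrite !inE eqxx.
Qed.

Lemma pu_uniq e v1 v2 w : pub e -> (v1, w) \in e -> (v2, w) \in e -> v1 = v2.
Proof.
move=> He; rewrite -!pu_pick // => /eqP -> /eqP [] //.
Qed.

Lemma pub_rel p q e : pub e -> pub (relabel_edges p q e).
Proof.
move=> /forallP H; apply/forallP => w.
have -> : [set v | (v, w) \in relabel_edges p q e] =
          p @: [set v | (v, (q^-1)%g w) \in e].
  apply/setP => v; rewrite inE mem_rel.
  rewrite -{2}(permKV p v) mem_imset ?inE //; exact: perm_inj.
by rewrite card_imset //; exact: perm_inj.
Qed.

Lemma outdeg_rel p q e :
  outdeg (relabel_edges p q e) = [ffun v => outdeg e ((p^-1)%g v)].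
Proof.
apply/ffunP => v; rewrite !ffunE.
have -> : [set w | (v, w) \in relabel_edges p q e] =
          q @: [set w | ((p^-1)%g v, w) \in e].
  apply/setP => w; rewrite inE mem_rel.
  rewrite -{2}(permKV q w) mem_imset ?inE //; exact: perm_inj.
by rewrite card_imset //; exact: perm_inj.
Qed.


Lemma trans_child b b' : pub b -> pub b' -> outdeg b = outdeg b' ->
  exists r : {perm 'I_(X n.+1)}, relabel_edges 1%g r b = b'.
Proof.
move=> Hb Hb' Ho.
pose A w := [set w' | pk b w' == pk b w].
pose B w := [set w' | pk b' w' == pk b w].
pose f w := nth w (enum (B w)) (index w (enum (A w))).
have HAB w : exists v, [/\ pk b w = Some v, A w = [set w' | (v, w') \in b]
     & B w = [set w' | (v, w') \in b']].
  have [v Hv] := pu_ex Hb w; exists v; split => //.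
    by apply/setP => w'; rewrite !inE Hv pu_pick.
  by apply/setP => w'; rewrite !inE Hv pu_pick.
have Hcard w : #|A w| = #|B w|.
  have [v [_ -> ->]] := HAB w.
  by move/ffunP: Ho => /(_ v); rewrite !ffunE.
have HwA w : w \in A w by rewrite inE.
have Hi w : index w (enum (A w)) < size (enum (B w)).
  by rewrite -cardE -Hcard cardE index_mem mem_enum.
have HfB w : f w \in B w by rewrite -mem_enum mem_nth.
have finj : injective f.
  move=> w1 w2 E12.
  have Hpk : pk b w1 = pk b w2.
    move: (HfB w1) (HfB w2); rewrite !inE E12 => /eqP -> /eqP ->.
    done.
  have EA : A w1 = A w2 by rewrite /A Hpk.
  have EB : B w1 = B w2 by rewrite /B Hpk.
  have Hi2 := Hi w2; rewrite -EA -EB in Hi2.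
  move: E12; rewrite /f (set_nth_default w2 w1 (Hi w1)) -EB -EA.
  move/eqP; rewrite nth_uniq ?enum_uniq ?Hi // => /eqP Hidx.
  have Hw2 : w2 \in enum (A w1) by rewrite mem_enum EA.
  have Hw1 : w1 \in enum (A w1) by rewrite mem_enum.
  by rewrite -(nth_index w1 Hw1) Hidx nth_index.
exists (perm finj); apply/setP => -[x y].
rewrite mem_rel invg1 perm1.
set w := ((perm finj)^-1)%g y.
have -> : y = f w by rewrite /w -{1}(permKV (perm finj) y) permE.
have [v [Hv _ _]] := HAB w.
have Hv' : pk b' (f w) = Some v by move: (HfB w); rewrite inE Hv => /eqP.
by rewrite -!pu_pick // Hv Hv'.
Qed.

Definition blk e (v : 'I_(X n)) := [set w | (v, w) \in e].

Lemma blk_disj e v1 v2 w : pub e -> w \in blk e v1 -> w \in blk e v2 -> v1 = v2.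
Proof. by move=> He; rewrite !inE; exact: pu_uniq. Qed.

Lemma sib_eq e : sibship e = [set blk e v | v in ~: [set v | blk e v == finset.set0]].
Proof.
apply/setP => S; rewrite !inE; apply/andP/imsetP.
  move=> [HS /imsetP [v _ Hv]]; exists v => //; subst S; rewrite !inE; exact: HS.
move=> [v]; rewrite !inE => Hv ->; split => //; exact: imset_f.
Qed.

Lemma card_sib e : pub e ->
  #|~: [set v | blk e v == finset.set0]| = #|sibship e|.
Proof.
move=> He; rewrite sib_eq card_in_imset //.
move=> v1 v2; rewrite !inE => /set0Pn [w Hw] _ E12.
apply: (blk_disj He Hw); by rewrite -E12.
Qed.

Lemma trans_par b b' : pub b -> pub b' -> sibship b = sibship b' ->
  exists r : {perm 'I_(X n)}, relabel_edges r 1%g b = b'.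
Proof.
move=> Hb Hb' Hs.
pose Eb := [set v | blk b v == finset.set0].
pose Eb' := [set v | blk b' v == finset.set0].
pose f v := if blk b v != finset.set0 then odflt v [pick v' | blk b' v' == blk b v]
            else nth v (enum Eb') (index v (enum Eb)).
have HcE : #|Eb| = #|Eb'|.
  apply/eqP; rewrite -(eqn_add2r #|~: Eb|) cardsC.
  by rewrite /Eb card_sib // Hs -card_sib // cardsC.
have Hne v : blk b v != finset.set0 -> blk b' (f v) = blk b v.
  move=> Hv; rewrite /f Hv.
  have : blk b v \in sibship b' by rewrite -Hs !inE Hv imset_f.
  rewrite !inE => /andP [_ /imsetP [v' _ Hv']].
  case: pickP => [u /eqP //|/(_ v')]; by rewrite Hv' eqxx.
have He v : blk b v == finset.set0 -> f v \in Eb'.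
  move=> Hv; rewrite /f Hv /= -mem_enum mem_nth // -cardE -HcE cardE.
  by rewrite index_mem mem_enum inE.
have finj : injective f.
  move=> v1 v2 E12.
  case: (boolP (blk b v1 == finset.set0)) => H1; case: (boolP (blk b v2 == finset.set0)) => H2.
  - move: E12; rewrite /f H1 H2 /=.
    have Hi v : v \in Eb -> index v (enum Eb) < size (enum Eb').
      by move=> Hv; rewrite -cardE -HcE cardE index_mem mem_enum.
    have I1 : v1 \in Eb by rewrite inE.
    have I2 : v2 \in Eb by rewrite inE.
    rewrite (set_nth_default v2 v1 (Hi _ I1)) => /eqP.
    rewrite nth_uniq ?enum_uniq ?Hi // => /eqP Hidx.
    have J1 : v1 \in enum Eb by rewrite mem_enum.
    by rewrite -(nth_index v1 J1) Hidx nth_index // mem_enum.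
  - have := He _ H1; rewrite E12 inE Hne //; by rewrite (negbTE H2).
  - have := He _ H2; rewrite -E12 inE Hne //; by rewrite (negbTE H1).
  - have := Hne _ H1; rewrite E12 Hne // => E.
    have [w Hw] := set0Pn _ H1.
    by apply: (blk_disj Hb Hw); rewrite E.
have Hpar w : exists v, (v, w) \in b.
  by have [v /eqP] := pu_ex Hb w; rewrite pu_pick //; exists v.
exists (perm finj); apply/setP => -[x y].
rewrite mem_rel invg1 perm1.
set v := ((perm finj)^-1)%g x.
have -> : x = f v by rewrite /v -{1}(permKV (perm finj) x) permE.
apply/idP/idP => H.
  have Hv : blk b v != finset.set0 by apply/set0Pn; exists y; rewrite inE.
  by have := Hne _ Hv => /setP /(_ y); rewrite !inE H.
have [u Hu] := Hpar y.
have Hu0 : blk b u != finset.set0 by apply/set0Pn; exists y; rewrite inE.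
have Hfu : (f u, y) \in b' by have := Hne _ Hu0 => /setP /(_ y); rewrite !inE Hu.
by rewrite -(finj _ _ (pu_uniq Hb' Hfu H)).
Qed.

Lemma blk_rel p q e v : blk (relabel_edges p q e) v = q @: blk e ((p^-1)%g v).
Proof.
apply/setP => w; rewrite inE mem_rel.
rewrite -[in RHS](permKV q w) mem_imset ?inE //; exact: perm_inj.
Qed.

Lemma sib_rel p q e : sibship (relabel_edges p q e) = relabel_part q (sibship e).
Proof.
have sibE e' : sibship e' = [set blk e' v | v : 'I_(X n)] :\ finset.set0 by [].
apply/setP => S; rewrite /relabel_part !sibE.
apply/idP/idP.
  rewrite !inE => /andP [HS /imsetP [v _ Hv]].
  rewrite Hv blk_rel; apply/imsetP; exists (blk e ((p^-1)%g v)) => //.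
  rewrite !inE imset_f // andbT; apply: contra HS => /eqP H.
  by rewrite Hv blk_rel H imset0.
move=> /imsetP [T]; rewrite !inE => /andP [HT /imsetP [v _ HTv]] HS.
rewrite andbC; apply/andP; split.
  apply/imsetP; exists (p v) => //; by rewrite HS HTv blk_rel permK.
apply: contra HT => /eqP H; apply/eqP.
apply: (imset_inj (@perm_inj _ q)); by rewrite imset0 -HS.
Qed.

Definition gF p (a e : ed) : nat := \sum_(q : {perm 'I_(X n.+1)}) (relabel_edges p q a == e).
Definition gtF (f : {ffun 'I_(X n) -> nat}) e : nat :=
  if [pick b | pub b && (outdeg b == f)] is Some b then gF 1%g b e else 0.

Lemma gF_eq p a e : pub a -> gF p a e = gtF [ffun v => outdeg a ((p^-1)%g v)] e.
Proof.
move=> Ha; rewrite /gtF; case: pickP => [b /andP [Hb /eqP Hob]|H0]; last first.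
  by have := H0 (relabel_edges p 1%g a); rewrite pub_rel // outdeg_rel eqxx.
have [r Hr] := trans_child Hb (pub_rel p 1%g Ha) (etrans Hob (esym (outdeg_rel _ _ _))).
rewrite /gF [RHS](reindex_inj (mulgI r)); apply: eq_bigr => q _.
have -> : relabel_edges p q a = relabel_edges 1%g q (relabel_edges p 1%g a).
  by rewrite rel_comp mulg1 mul1g.
by rewrite -Hr rel_comp mulg1.
Qed.

Definition gB q (a e : ed) : nat := \sum_(p : {perm 'I_(X n)}) (relabel_edges p q a == e).
Definition gtB (B : {set {set 'I_(X n.+1)}}) e : nat :=
  if [pick b | pub b && (sibship b == B)] is Some b then gB 1%g b e else 0.

Lemma gB_eq q a e : pub a -> gB q a e = gtB (relabel_part q (sibship a)) e.
Proof.
move=> Ha; rewrite /gtB; case: pickP => [b /andP [Hb /eqP Hsb]|H0]; last first.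
  by have := H0 (relabel_edges 1%g q a); rewrite pub_rel // sib_rel eqxx.
have [r Hr] := trans_par Hb (pub_rel 1%g q Ha) (etrans Hsb (esym (sib_rel _ _ _))).
rewrite /gB [RHS](reindex_inj (mulgI r)); apply: eq_bigr => p _.
have -> : relabel_edges p q a = relabel_edges p 1%g (relabel_edges 1%g q a).
  by rewrite rel_comp mulg1 mul1g.
by rewrite -Hr rel_comp mulg1.
Qed.

Lemma relabel_partK q B : relabel_part q (relabel_part (q^-1)%g B) = B.
Proof.
rewrite /relabel_part -imset_comp.
rewrite (eq_imset _ (g := id)) ?imset_id // => S /=.
rewrite -imset_comp (eq_imset _ (g := id)) ?imset_id // => x /=.
by rewrite permKV.
Qed.

Definition outdegB e : {ffun 'I_(X n) -> 'I_(X n.+1).+1} := [ffun v => inord (outdeg e v)].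
Definition ofB (fB : {ffun 'I_(X n) -> 'I_(X n.+1).+1}) : {ffun 'I_(X n) -> nat} :=
  [ffun v => nat_of_ord (fB v)].

Lemma outdegBK e : ofB (outdegB e) = outdeg e.
Proof.
apply/ffunP => v; rewrite !ffunE inordK // ltnS.
by rewrite /outdeg ?ffunE (leq_trans (max_card _)) // card_ord.
Qed.

Lemma ofB_inj : injective ofB.
Proof. by move=> f1 f2 /ffunP H; apply/ffunP => v; have := H v; rewrite !ffunE => /val_inj. Qed.

Lemma outdegB_eq e fB : (outdegB e == fB) = (outdeg e == ofB fB).
Proof.
apply/eqP/eqP => [<-|H]; first by rewrite outdegBK.
by apply: ofB_inj; rewrite outdegBK.
Qed.

End Comb.
Local Open Scope classical_set_scope.
Local Open Scope ring_scope.

Section PR.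
Variables (d : measure_display) (Omega : measurableType d) (R : realType)
  (P : probability Omega R).

Definition pr (A : set Omega) : R := fine (P A).

Lemma prE A : measurable A -> P A = (pr A)%:E.
Proof. by move=> mA; rewrite /pr fineK //; exact: fin_num_measure. Qed.

Lemma pr_ge0 A : 0 <= pr A.
Proof. by rewrite /pr fine_ge0. Qed.

Lemma pr0 : pr set0 = 0.
Proof. by rewrite /pr measure0. Qed.

Lemma prT : pr setT = 1.
Proof. by rewrite /pr probability_setT. Qed.

Lemma pr_eq0 A : A = set0 -> pr A = 0.
Proof. by move=> ->; exact: pr0. Qed.

Section Part.
Variables (T : finType) (Z : Omega -> T).
Hypothesis mZ : forall t, measurable [set w | Z w = t].

Lemma mZl (r : seq T) : measurable [set w | Z w \in r].
Proof.
elim: r => [|t r IH].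
  by rewrite (_ : [set w | Z w \in [::]] = set0) //; apply/seteqP; split => w.
rewrite (_ : [set w | Z w \in t :: r] = [set w | Z w = t] `|` [set w | Z w \in r]).
  exact: measurableU.
apply/seteqP; split => w /=; rewrite inE.
  by case/orP => [/eqP ->|H]; [left|right].
by case => [->|->]; rewrite ?eqxx ?orbT.
Qed.

Lemma mZp (S : pred T) : measurable [set w | S (Z w)].
Proof.
rewrite (_ : [set w | S (Z w)] = [set w | Z w \in seq.filter S (enum T)]); first exact: mZl.
by apply/seteqP; split => w /=; rewrite mem_filter mem_enum andbT.
Qed.

Lemma pr_part A : measurable A -> pr A = \sum_(t : T) pr (A `&` [set w | Z w = t]).
Proof.
move=> mA.
have H r : uniq r -> P (A `&` [set w | Z w \in r]) =
    (\sum_(t <- r) P (A `&` [set w | Z w = t]))%E.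
  elim: r => [|t r IH] /=.
    rewrite big_nil (_ : A `&` _ = set0) ?measure0 //.
    by apply/seteqP; split => w // [].
  move=> /andP [tr ur]; rewrite big_cons -IH //.
  rewrite (_ : A `&` [set w | Z w \in t :: r] = (A `&` [set w | Z w = t]) `|` (A `&` [set w | Z w \in r])).
    rewrite measureU //; try (apply: measurableI => //; exact: mZl).
    apply/seteqP; split => w // [[_ H1] [_ H2]]; move: tr; by rewrite -H1 H2.
  apply/seteqP; split => w /=.
    by case=> Aw; rewrite inE => /orP [/eqP ->|H]; [left|right].
  by case=> -[Aw H]; split => //; rewrite inE ?H ?eqxx ?orbT.
have := H _ (enum_uniq T).
rewrite (_ : A `&` [set w | Z w \in enum T] = A); last first.
  by apply/seteqP; split => [w []//|w Aw]; split => //=; rewrite mem_enum.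
rewrite big_enum /= => HA.
rewrite /pr HA.
rewrite (eq_bigr (fun t => (pr (A `&` [set w | Z w = t]))%:E)); last first.
  move=> t _; rewrite -prE //; apply: measurableI => //.
by rewrite sumEFin.
Qed.

End Part.
End PR.
Local Open Scope classical_set_scope.
Local Open Scope ring_scope.

Definition upd (T : nat -> Type) (y : forall j, T j) (i : nat) (x : T i) : forall j, T j :=
  fun j => if (i =P j) is ReflectT e then eq_rect i T x j e else y j.

Lemma upd_eq (T : nat -> Type) (y : forall j, T j) i (x : T i) : upd y x i = x.
Proof.
rewrite /upd; case: (i =P i) => [e|] //.
by rewrite (eq_irrelevance e erefl).
Qed.

Lemma upd_neq (T : nat -> Type) (y : forall j, T j) i (x : T i) j : i != j -> upd y x j = y j.
Proof. by rewrite /upd; case: (i =P j). Qed.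

Section Gen.
Variables (d : measure_display) (Omega : measurableType d) (R : realType)
  (P : probability Omega R)
  (tau : option nat) (X : nat -> nat) (k : forall n, 'I_(X n) -> nat)
  (E : forall n, Omega -> edges X n)
  (sigma : forall n, Omega -> {perm 'I_(X n)}).
Hypotheses (HE : discrete_rv E (valid_edge tau)) (HS : discrete_rv sigma (lt_tau tau))
  (Hgen : genealogy_model tau k E) (Hunif : uniform_perms P tau sigma)
  (Hind : indep_fam P (fdd_events sigma (lt_tau tau)) (fdd_events E (valid_edge tau))).

Local Notation pr := (pr P).

Definition SA (l : seq nat) (y : forall i, {perm 'I_(X i)}) :=
  [set w | forall i, i \in l -> sigma i w = y i].
Definition EA (l : seq nat) (a : forall i, edges X i) :=
  [set w | forall i, i \in l -> E i w = a i].
Definition Sev i (p : {perm 'I_(X i)}) := [set w | sigma i w = p].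
Definition Eev i (a : edges X i) := [set w | E i w = a].
Arguments Sev i p : clear implicits.
Arguments Eev i a : clear implicits.
Definition csig (l : seq nat) : R := \prod_(i <- l) ((X i)`!%:R)^-1.

Fixpoint WS (l : seq nat) : finType :=
  if l is i :: l' then ({perm 'I_(X i)} * WS l')%type else unit.
Fixpoint ZS (l : seq nat) (w : Omega) : WS l :=
  match l return WS l with [::] => tt | i :: l' => (sigma i w, ZS l' w) end.
Fixpoint WE (l : seq nat) : finType :=
  if l is i :: l' then (edges X i * WE l')%type else unit.
Fixpoint ZE (l : seq nat) (w : Omega) : WE l :=
  match l return WE l with [::] => tt | i :: l' => (E i w, ZE l' w) end.

Lemma ZS_eq l w w' : ZS l w = ZS l w' <-> (forall i, i \in l -> sigma i w = sigma i w').
Proof.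
elim: l => [|i l IH] /=; first by split => // _ [].
split.
  case=> h1 /IH h2 j; rewrite inE => /orP [/eqP ->|]; [exact: h1|exact: h2].
by move=> H; rewrite (H i (mem_head _ _)) (proj2 IH) // => j jl; apply: H; rewrite inE jl orbT.
Qed.

Lemma ZE_eq l w w' : ZE l w = ZE l w' <-> (forall i, i \in l -> E i w = E i w').
Proof.
elim: l => [|i l IH] /=; first by split => // _ [].
split.
  case=> h1 /IH h2 j; rewrite inE => /orP [/eqP ->|]; [exact: h1|exact: h2].
by move=> H; rewrite (H i (mem_head _ _)) (proj2 IH) // => j jl; apply: H; rewrite inE jl orbT.
Qed.

Lemma mSev i p : lt_tau tau i -> measurable (Sev i p).
Proof. by move=> Hi; apply: HS. Qed.

Lemma mEev i a : valid_edge tau i -> measurable (Eev i a).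
Proof. by move=> Hi; apply: HE. Qed.

Lemma mZS l v : all (lt_tau tau) l -> measurable [set w | ZS l w = v].
Proof.
elim: l v => [|i l IH] /= v.
  by case: v => _; rewrite (_ : [set w | tt = tt] = setT) //; apply/seteqP; split.
move=> /andP [Hi Hl]; case: v => p v.
rewrite (_ : [set w | (sigma i w, ZS l w) = (p, v)] = Sev i p `&` [set w | ZS l w = v]).
  by apply: measurableI; [exact: mSev|exact: IH].
by apply/seteqP; split => w /=; rewrite /Sev /Eev /=; [case=> -> ->|case=> -> ->].
Qed.

Lemma mZE l v : all (valid_edge tau) l -> measurable [set w | ZE l w = v].
Proof.
elim: l v => [|i l IH] /= v.
  by case: v => _; rewrite (_ : [set w | tt = tt] = setT) //; apply/seteqP; split.
move=> /andP [Hi Hl]; case: v => p v.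
rewrite (_ : [set w | (E i w, ZE l w) = (p, v)] = Eev i p `&` [set w | ZE l w = v]).
  by apply: measurableI; [exact: mEev|exact: IH].
by apply/seteqP; split => w /=; rewrite /Sev /Eev /=; [case=> -> ->|case=> -> ->].
Qed.

Definition det (lS lE : seq nat) (H : set Omega) :=
  forall w w', (forall i, i \in lS -> sigma i w = sigma i w') ->
    (forall i, i \in lE -> E i w = E i w') -> H w -> H w'.

Definition atom lS lE (w0 : Omega) :=
  SA lS (fun i => sigma i w0) `&` EA lE (fun i => E i w0).

Section Win.
Variables (lS lE : seq nat).
Hypotheses (HlS : all (lt_tau tau) lS) (HlE : all (valid_edge tau) lE).

Let Z w := (ZS lS w, ZE lE w).
Let mZ v : measurable [set w | Z w = v].
Proof.
rewrite (_ : [set w | Z w = v] = [set w | ZS lS w = v.1] `&` [set w | ZE lE w = v.2]).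
  by apply: measurableI; [exact: mZS|exact: mZE].
by case: v => v1 v2; apply/seteqP; split => w; rewrite /Z /=; [case=> -> ->|case=> -> ->].
Qed.

Let Zeq w w' : Z w = Z w' <-> atom lS lE w' w.
Proof.
rewrite /Z /atom /SA /EA /=; split.
  by case=> /ZS_eq h1 /ZE_eq h2; split => i Hi; [rewrite h1|rewrite h2].
by case=> h1 h2; congr pair; [apply/ZS_eq|apply/ZE_eq].
Qed.

Lemma det_meas H : det lS lE H -> measurable H.
Proof.
move=> dH.
rewrite (_ : H = [set w | (fun v => `[< exists w0, H w0 /\ Z w0 = v >]) (Z w)]).
  exact: (mZp mZ (fun v => `[< exists w0, H w0 /\ Z w0 = v >])).
apply/seteqP; split => w /=.
  by move=> Hw; apply/asboolP; exists w.
move/asboolP => [w0 [Hw0 /Zeq [h1 h2]]].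
apply: (dH w0 w _ _ Hw0) => i Hi. all: [> by rewrite h1 | by rewrite h2].
Qed.

Lemma det_lin H B (c : R) : det lS lE H -> measurable B ->
  (forall w0, H w0 -> pr (atom lS lE w0 `&` B) = c * pr (atom lS lE w0)) ->
  pr (H `&` B) = c * pr H.
Proof.
move=> dH mB Hat.
have mH := det_meas dH.
rewrite (pr_part P mZ (measurableI _ _ mH mB)) (pr_part P mZ mH) mulr_sumr.
apply: eq_bigr => v _.
case: (pselect (exists w0, H w0 /\ Z w0 = v)) => [[w0 [Hw0 <-]]|Hn].
  have Eq : H `&` [set w | Z w = Z w0] = atom lS lE w0.
    apply/seteqP; split => w /=.
      by move=> [_ /Zeq].
    move=> Hw; split; last by apply/Zeq.
    by case: Hw => h1 h2; apply: (dH w0) => // i Hi; [rewrite h1|rewrite h2].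
  rewrite Eq -Hat //; congr pr.
  rewrite -Eq; apply/seteqP; split => w /=; by [case=> -[] | case=> -[]].
rewrite !pr_eq0 ?mulr0 //.
  apply/seteqP; split => w // [Hw Zw]; apply: Hn; by exists w.
apply/seteqP; split => w // [[Hw _] Zw]; apply: Hn; by exists w.
Qed.

End Win.

Lemma SA_det l y : det l [::] (SA l y).
Proof. by move=> w w' h _ Hw i Hi; rewrite -h // Hw. Qed.

Lemma EA_det l a : det [::] l (EA l a).
Proof. by move=> w w' _ h Hw i Hi; rewrite -h // Hw. Qed.

Lemma det_setT : det [::] [::] setT.
Proof. by []. Qed.

Lemma det_mono lS lE lS' lE' H : {subset lS <= lS'} -> {subset lE <= lE'} ->
  det lS lE H -> det lS' lE' H.
Proof.
move=> s1 s2 dH w w' h1 h2; apply: dH => i Hi; [exact: h1 (s1 _ Hi)|exact: h2 (s2 _ Hi)].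
Qed.

Lemma detI lS lE H1 H2 : det lS lE H1 -> det lS lE H2 -> det lS lE (H1 `&` H2).
Proof. by move=> d1 d2 w w' h1 h2 [a b]; split; [exact: (d1 w)|exact: (d2 w)]. Qed.

Lemma SA_undup l y : SA (undup l) y = SA l y.
Proof. by apply/seteqP; split => w /= H i Hi; apply: H; rewrite ?mem_undup in Hi *. Qed.

Lemma EA_undup l a : EA (undup l) a = EA l a.
Proof. by apply/seteqP; split => w /= H i Hi; apply: H; rewrite ?mem_undup in Hi *. Qed.

Lemma F1 lS y lE a : uniq lS -> all (lt_tau tau) lS -> all (valid_edge tau) lE ->
  pr (SA lS y `&` EA lE a) = csig lS * pr (EA lE a).
Proof.
move=> ulS HlS HlE.
have mSA : measurable (SA lS y) by apply: (det_meas HlS (isT : all _ [::])); exact: SA_det.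
have mEA : measurable (EA lE a) by apply: (det_meas (isT : all _ [::]) HlE); exact: EA_det.
have h := Hind (ex_intro _ lS (ex_intro _ y (conj HlS erefl)))
               (ex_intro _ lE (ex_intro _ a (conj HlE erefl))).
have hu := (proj1 Hunif) lS y ulS HlS.
apply: EFin_inj; rewrite -prE; last exact: measurableI.
rewrite -/(SA lS y) -/(EA lE a) in h hu.
rewrite h hu (prE P mEA) EFinM; congr (_ * _)%E.
rewrite /csig -prodEFin; apply: eq_big_seq => i Hi.
by rewrite (proj2 Hunif) //; move/allP: HlS; apply.
Qed.

Lemma sigmaE_indep lS y lE G : uniq lS -> all (lt_tau tau) lS -> all (valid_edge tau) lE ->
  det [::] lE G -> pr (SA lS y `&` G) = csig lS * pr G.
Proof.
move=> ulS HlS HlE dG; rewrite setIC.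
have mSA : measurable (SA lS y) by apply: (det_meas HlS (isT : all _ [::])); exact: SA_det.
apply: (det_lin (isT : all _ [::]) HlE dG mSA) => w0 _.
have -> : atom [::] lE w0 = EA lE (fun i => E i w0).
  by rewrite /atom (_ : SA [::] _ = setT) ?setTI //; apply/seteqP; split.
by rewrite setIC F1.
Qed.

Lemma fresh_sigma i q lS lE H : lt_tau tau i -> i \notin lS -> all (lt_tau tau) lS ->
  all (valid_edge tau) lE -> det lS lE H ->
  pr (Sev i q `&` H) = ((X i)`!%:R)^-1 * pr H.
Proof.
move=> Hi ilS HlS HlE dH; rewrite setIC.
apply: (det_lin HlS HlE dH (mSev q Hi)) => w0 _.
set y0 := fun j => sigma j w0.
have EqS : SA lS y0 `&` Sev i q = SA (i :: undup lS) (upd y0 q).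
  apply/seteqP; split => w /=.
    move=> [H1 H2] j; rewrite inE => /orP [/eqP ->|Hj]; first by rewrite upd_eq.
    rewrite upd_neq; first by apply: H1; rewrite -mem_undup.
    by apply: contra ilS => /eqP ->; rewrite -mem_undup.
  move=> H1; split; last by have := H1 i (mem_head _ _); rewrite upd_eq.
  move=> j Hj; rewrite H1 ?inE ?mem_undup ?Hj ?orbT // upd_neq //.
  by apply: contra ilS => /eqP ->.
have uS : uniq (i :: undup lS) by rewrite /= mem_undup ilS undup_uniq.
have aS : all (lt_tau tau) (i :: undup lS).
  by rewrite /= Hi; apply/allP => j; rewrite mem_undup; move/allP: HlS; apply.
have aS' : all (lt_tau tau) (undup lS).
  by apply/allP => j; rewrite mem_undup; move/allP: HlS; apply.
rewrite /atom -setIA (setIC (EA _ _)) setIA EqS F1 //.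
rewrite -(SA_undup lS) F1 ?undup_uniq //.
by rewrite /csig big_cons mulrA.
Qed.

Section Stat.
Variables (N : nat) (Tst : finType) (st : edges X N -> Tst) (C : pred nat).
Hypothesis HN : valid_edge tau N.
Hypothesis Hst : forall l a t, all C l -> all (valid_edge tau) l ->
  pr ([set w | st (E N w) = t] `&` EA l a) = pr [set w | st (E N w) = t] * pr (EA l a).

Lemma mStev t : measurable [set w | st (E N w) = t].
Proof.
have mZ a : measurable [set w | E N w = a] by exact: mEev.
rewrite (_ : [set w | st (E N w) = t] = [set w | (fun a => st a == t) (E N w)]).
  exact: (mZp mZ (fun a => st a == t)).
by apply/seteqP; split => w /= /eqP.
Qed.

Lemma stat_indep lS lE H t : all (lt_tau tau) lS -> all (valid_edge tau) lE -> all C lE ->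
  det lS lE H ->
  pr ([set w | st (E N w) = t] `&` H) = pr [set w | st (E N w) = t] * pr H.
Proof.
move=> HlS HlE HC dH; rewrite setIC.
apply: (det_lin HlS HlE dH (mStev t)) => w0 _.
have aS' : all (lt_tau tau) (undup lS).
  by apply/allP => j; rewrite mem_undup; move/allP: HlS; apply.
have dG : det [::] (N :: lE) (EA lE (fun i => E i w0) `&` [set w | st (E N w) = t]).
  apply: detI; first by apply: (@det_mono [::] lE); [by []| by move=> j Hj; rewrite inE Hj orbT| exact: EA_det].
  by move=> w w' _ h <-; rewrite h // mem_head.
have aNE : all (valid_edge tau) (N :: lE) by rewrite /= HN.
rewrite /atom -(SA_undup lS) -setIA (sigmaE_indep _ (undup_uniq _) aS' aNE dG).
rewrite (sigmaE_indep _ (undup_uniq _) aS' HlE (@EA_det lE (fun i => E i w0))).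
by rewrite setIC Hst // mulrCA.
Qed.
End Stat.

Definition Fev m (e : edges X m) :=
  [set w | relabel_edges (sigma m w) (sigma m.+1 w) (E m w) = e].
Definition Kev N (f : {ffun 'I_(X N) -> nat}) := [set w | outdeg (E N w) = f].
Definition Xev N (B : {set {set 'I_(X N.+1)}}) := [set w | sibship (E N w) = B].
Arguments Fev m e : clear implicits.
Arguments Kev N f : clear implicits.
Arguments Xev N B : clear implicits.

Lemma tau_of_valid m : valid_edge tau m -> lt_tau tau m.
Proof. by rewrite /valid_edge /lt_tau; case: tau => // t; apply: ltnW. Qed.

Lemma Fev_det m e : det [:: m; m.+1] [:: m] (Fev m e).
Proof.
move=> w w' h1 h2 Hw; rewrite /Fev /=; rewrite /Fev /= in Hw; rewrite -Hw.
by rewrite (h1 m) ?(h1 m.+1) ?(h2 m) // !inE eqxx ?orbT.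
Qed.

Lemma det_Sev i p : det [:: i] [::] (Sev i p).
Proof. by move=> w w' h _; rewrite /Sev /= => <-; rewrite h // mem_head. Qed.

Lemma det_Eev i a : det [::] [:: i] (Eev i a).
Proof. by move=> w w' _ h; rewrite /Eev /= => <-; rewrite h // mem_head. Qed.

Lemma Eev_npu m a : valid_edge tau m -> ~~ pub a -> Eev m a = set0.
Proof.
move=> Hm Ha; apply/seteqP; split => w // Hw.
have [/pubP Hp _] := Hgen w Hm.
by move: Ha; rewrite /Eev /= in Hw; rewrite -Hw Hp.
Qed.

Lemma grouping N (Tst : finType) (st : edges X N -> Tst) (G : Tst -> R) A :
  valid_edge tau N -> measurable A ->
  \sum_(a : edges X N) G (st a) * pr (A `&` Eev N a) =
  \sum_(t : Tst) G t * pr (A `&` [set w | st (E N w) = t]).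
Proof.
move=> HN mA.
have mZ a : measurable [set w | E N w = a] by exact: mEev.
have mSt t : measurable [set w | st (E N w) = t].
  rewrite (_ : [set w | st (E N w) = t] = [set w | (fun a => st a == t) (E N w)]).
    exact: (mZp mZ (fun a => st a == t)).
  by apply/seteqP; split => w /= /eqP.
transitivity (\sum_(t : Tst) \sum_(a : edges X N) G t * ((st a == t)%:R * pr (A `&` Eev N a))).
  rewrite exchange_big; apply: eq_bigr => a _.
  rewrite (bigD1 (st a)) //= eqxx mul1r big1 ?addr0 // => t /negbTE.
  by rewrite eq_sym => ->; rewrite mul0r mulr0.
apply: eq_bigr => t _; rewrite -mulr_sumr; congr (_ * _).
rewrite (pr_part P mZ (measurableI _ _ mA (mSt t))); apply: eq_bigr => a _.
case: eqP => [<-|Hne].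
  rewrite mul1r; congr pr; apply/seteqP; split => w /=.
    by case=> Aw Ew; split => //; split => //; rewrite /Eev /= in Ew; rewrite Ew.
  by case=> -[Aw _] Ew.
rewrite mul0r pr_eq0 //; apply/seteqP; split => w // [[Aw Sw] Ew].
by apply: Hne; rewrite -Sw Ew.
Qed.

Lemma triple m e H : valid_edge tau m -> measurable H ->
  pr (Fev m e `&` H) = \sum_(p : {perm 'I_(X m)}) \sum_(q : {perm 'I_(X m.+1)})
     \sum_(a : edges X m)
      (relabel_edges p q a == e)%:R * pr (Sev m p `&` Sev m.+1 q `&` Eev m a `&` H).
Proof.
move=> Hm mH.
have tm := tau_of_valid Hm.
have mF : measurable (Fev m e).
  apply: (det_meas (lS := [:: m; m.+1]) (lE := [:: m])); last exact: Fev_det.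
    by rewrite /= tm; move: Hm; rewrite /valid_edge => ->.
  by rewrite /= Hm.
rewrite (pr_part P (fun p => mSev p tm) (measurableI _ _ mF mH)).
apply: eq_bigr => p _.
rewrite (pr_part P (fun q => mSev q Hm)); last by apply: measurableI => //; [exact: measurableI|exact: mSev].
apply: eq_bigr => q _.
rewrite (pr_part P (fun a => mEev a Hm)); last first.
  by apply: measurableI => //; [|exact: mSev]; apply: measurableI => //; [exact: measurableI|exact: mSev].
apply: eq_bigr => a _.
case: eqP => [<-|Hne].
  rewrite mul1r; congr pr; apply/seteqP; split => w /=.
  - by rewrite /Fev /Sev /Eev /=; case=> -[[[Fw Hw] <-] <-] <-.
  - by rewrite /Fev /Sev /Eev /=; case=> -[[<- <-] <-] Hw.
- rewrite mul0r pr_eq0 //; apply/seteqP; split => w //.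
  by rewrite /Fev /Sev /Eev /=; case=> -[[[Fw Hw] Sp] Sq] Ea; apply: Hne; rewrite -Sp -Sq -Ea.
Qed.

Lemma mStat N (Tst : finType) (st : edges X N -> Tst) t : valid_edge tau N ->
  measurable [set w | st (E N w) = t].
Proof.
move=> HN; have mZ a : measurable [set w | E N w = a] by exact: mEev.
rewrite (_ : [set w | st (E N w) = t] = [set w | (fun a => st a == t) (E N w)]).
  exact: (mZp mZ (fun a => st a == t)).
by apply/seteqP; split => w /= /eqP.
Qed.

Lemma mEA l a : all (valid_edge tau) l -> measurable (EA l a).
Proof. by move=> Hl; apply: (det_meas (isT : all _ [::]) Hl); exact: EA_det. Qed.

Lemma mSA l y : all (lt_tau tau) l -> measurable (SA l y).
Proof. by move=> Hl; apply: (det_meas Hl (isT : all _ [::])); exact: SA_det. Qed.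

Lemma indep_pr A B : measurable A -> measurable B -> P (A `&` B) = (P A * P B)%E ->
  pr (A `&` B) = pr A * pr B.
Proof.
move=> mA mB h; apply: EFin_inj; rewrite EFinM -!prE //; exact: measurableI.
Qed.

Lemma ex_max (s : seq nat) : s != [::] -> exists2 N, N \in s & all (fun j => (j <= N)%N) s.
Proof.
elim: s => [//|x s IH] _.
case: (eqVneq s [::]) => [->|/IH [N Ns Hs]]; first by exists x; rewrite ?mem_head //= leqnn.
case: (leqP N x) => H.
  exists x; first exact: mem_head.
  by rewrite /= leqnn /=; apply/allP => j Hj; exact: leq_trans (allP Hs j Hj) H.
exists N; first by rewrite inE Ns orbT.
by rewrite /= (ltnW H) /=.
Qed.

Lemma ex_min (s : seq nat) : s != [::] -> exists2 M, M \in s & all (fun j => (M <= j)%N) s.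
Proof.
elim: s => [//|x s IH] _.
case: (eqVneq s [::]) => [->|/IH [N Ns Hs]]; first by exists x; rewrite ?mem_head //= leqnn.
case: (leqP x N) => H.
  exists x; first exact: mem_head.
  by rewrite /= leqnn /=; apply/allP => j Hj; exact: leq_trans H (allP Hs j Hj).
exists N; first by rewrite inE Ns orbT.
by rewrite /= (ltnW H) /=.
Qed.

Lemma size_rm (s : seq nat) N : N \in s -> (size (seq.filter (predC1 N) s) < size s)%N.
Proof.
move=> Ns; rewrite size_filter -(count_predC (predC1 N) s).
rewrite -{1}(addn0 (count _ s)) ltn_add2l -has_count; apply/hasP; exists N => //=.
by rewrite eqxx.
Qed.

Lemma undup_rm (s : seq nat) N : N \in s ->
  perm_eq (undup s) (N :: undup (seq.filter (predC1 N) s)).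
Proof.
move=> Ns; rewrite -filter_undup -rem_filter ?undup_uniq //.
by apply: perm_to_rem; rewrite mem_undup.
Qed.

Definition FA (s : seq nat) (y : forall i, edges X i) :=
  [set w | forall i, i \in s -> perm_edges sigma E i w = y i].

Lemma FA_det s y : det (s ++ map succn s) s (FA s y).
Proof.
move=> w w' h1 h2 Hw i Hi; rewrite -(Hw i Hi) /perm_edges.
rewrite (h1 i) ?(h1 i.+1) ?(h2 i) // mem_cat ?Hi ?(map_f succn Hi) ?orbT //.
Qed.

Lemma FA_split s y N : N \in s ->
  FA s y = Fev N (y N) `&` FA (seq.filter (predC1 N) s) y.
Proof.
move=> Ns; apply/seteqP; split => w /=.
  move=> H; split; first exact: (H N Ns).
  by move=> i; rewrite mem_filter => /andP [_ Hi]; apply: H.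
move=> [H1 H2] i Hi; case: (eqVneq i N) => [->|Hne]; first exact: H1.
by apply: H2; rewrite mem_filter /= Hne.
Qed.

Lemma FA_nil y : FA [::] y = setT.
Proof. by apply/seteqP; split. Qed.

Lemma SA_nil z : SA [::] z = setT.
Proof. by apply/seteqP; split. Qed.

Lemma all_valid_tau s : all (valid_edge tau) s -> all (lt_tau tau) (s ++ map succn s).
Proof.
move=> Hs; rewrite all_cat; apply/andP; split.
  by apply/allP => i Hi; apply: tau_of_valid; exact: (allP Hs).
by apply/allP => j /mapP [i Hi ->]; exact: (allP Hs).
Qed.

Section FW.
Hypothesis Hfw : forward_neutral P tau E.

Definition hF N (e : edges X N) : R :=
  \sum_(fB : {ffun 'I_(X N) -> 'I_(X N.+1).+1})
     (gtF (ofB fB) e)%:R * pr [set w | outdegB (E N w) = fB].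

Lemma KB_eq N fB : [set w | outdegB (E N w) = fB] = [set w | outdeg (E N w) = ofB fB].
Proof.
by apply/seteqP; split => w /= /eqP; [rewrite outdegB_eq => /eqP|rewrite -outdegB_eq => /eqP].
Qed.

Lemma K_Hst N : valid_edge tau N -> forall l a fB, all (fun m => (m < N)%N) l ->
  all (valid_edge tau) l ->
  pr ([set w | outdegB (E N w) = fB] `&` EA l a) =
  pr [set w | outdegB (E N w) = fB] * pr (EA l a).
Proof.
move=> HN l a fB Hl Hv; rewrite KB_eq; set f := ofB fB.
have [_ hind] := Hfw HN.
have hK : [set w | outdeg (E N w) = f] = [set w | forall i, i \in [:: N] ->
    outdeg (E i w) = upd (fun i => [ffun _ : 'I_(X i) => 0%N]) f i].
  apply/seteqP; split => w /=.
    by move=> Hw i; rewrite inE => /eqP ->; rewrite upd_eq.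
  by move=> H; have := H N (mem_head _ _); rewrite upd_eq.
apply: indep_pr; [by rewrite /f -KB_eq; exact: mStat|exact: mEA|].
rewrite hK; apply: hind.
  by exists [:: N], (upd (fun i => [ffun _ : 'I_(X i) => 0%N]) f); split => //=; rewrite eqxx.
by exists l, a; split.
Qed.

Lemma hF_reindex N (HN : valid_edge tau N) (p : {perm 'I_(X N)}) e :
  \sum_(fB : {ffun 'I_(X N) -> 'I_(X N.+1).+1})
     (gtF [ffun v => ofB fB ((p^-1)%g v)] e)%:R * pr [set w | outdegB (E N w) = fB] = hF e.
Proof.
have hinj : injective (fun f : {ffun 'I_(X N) -> 'I_(X N.+1).+1} => [ffun v => f (p v)]).
  move=> f1 f2 /ffunP H; apply/ffunP => v; have := H ((p^-1)%g v); by rewrite !ffunE permKV.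
rewrite [LHS](reindex_inj hinj) /hF; apply: eq_bigr => f _; congr (_ * _).
  by congr (gtF _ e)%:R; apply/ffunP => v; rewrite !ffunE permKV.
rewrite !KB_eq /pr ((proj1 (Hfw HN)) p (ofB f)); congr (fine (P _)).
by apply/seteqP; split => w /= ->; apply/ffunP => v; rewrite !ffunE.
Qed.

Lemma fw_step N e lS lE H : valid_edge tau N -> all (fun i => (i <= N)%N) lS ->
  all (lt_tau tau) lS -> all (fun i => (i < N)%N) lE -> all (valid_edge tau) lE ->
  det lS lE H ->
  pr (Fev N e `&` H) = ((X N.+1)`!%:R)^-1 * hF e * pr H.
Proof.
move=> HN HlS1 HlS HlE1 HlE dH.
have tN := tau_of_valid HN.
have mH := det_meas HlS HlE dH.
set c := ((X N.+1)`!%:R)^-1.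
have mSH p : measurable (Sev N p `&` H) by apply: measurableI => //; exact: mSev.
have step1 p q a : (relabel_edges p q a == e)%:R * pr (Sev N p `&` Sev N.+1 q `&` Eev N a `&` H)
   = (relabel_edges p q a == e)%:R * (c * pr ((Sev N p `&` H) `&` Eev N a)).
  congr (_ * _).
  rewrite (_ : Sev N p `&` Sev N.+1 q `&` Eev N a `&` H =
               Sev N.+1 q `&` ((Sev N p `&` H) `&` Eev N a)); last first.
    by apply/seteqP; split => w /=; [case=> -[[? ?] ?] ?|case=> ? [[? ?] ?]].
  apply: (@fresh_sigma N.+1 q (N :: lS) (N :: lE)) => //.
  - rewrite inE negb_or; apply/andP; split; first by rewrite eqn_leq ltnn.
    by apply/negP => /(allP HlS1); rewrite ltnn.
  - by rewrite /= tN HlS.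
  - by rewrite /= HN HlE.
  - apply: detI; first apply: detI.
    + by apply: (@det_mono [:: N] [::]) => //[j|]; [rewrite !inE => ->|exact: det_Sev].
    + by apply: (det_mono _ _ dH) => j Hj; rewrite inE Hj orbT.
    + by apply: (@det_mono [::] [:: N]) => //[j|]; [rewrite !inE => ->|exact: det_Eev].
rewrite triple //.
transitivity (\sum_(p : {perm 'I_(X N)}) \sum_(a : edges X N)
   (gF p a e)%:R * (c * pr ((Sev N p `&` H) `&` Eev N a))).
  apply: eq_bigr => p _; rewrite exchange_big; apply: eq_bigr => a _.
  rewrite /gF natr_sum mulr_suml; apply: eq_bigr => q _; exact: step1.
transitivity (c * \sum_(p : {perm 'I_(X N)}) \sum_(f : {ffun 'I_(X N) -> 'I_(X N.+1).+1})
   (gtF [ffun v => ofB f ((p^-1)%g v)] e)%:R * pr ((Sev N p `&` H) `&` [set w | outdegB (E N w) = f])).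
  rewrite mulr_sumr; apply: eq_bigr => p _.
  rewrite -(@grouping N _ (@outdegB X N) (fun f => (gtF [ffun v => ofB f ((p^-1)%g v)] e)%:R)) //.
  rewrite mulr_sumr; apply: eq_bigr => a _.
  case: (boolP (pub a)) => Ha; first by rewrite gF_eq // outdegBK mulrCA.
  by rewrite Eev_npu // setI0 pr0 !mulr0.
transitivity (c * (\sum_(p : {perm 'I_(X N)}) pr (Sev N p `&` H)) * hF e).
  rewrite -mulrA; congr (_ * _); rewrite mulr_suml; apply: eq_bigr => p _.
  rewrite -(hF_reindex HN p) mulr_sumr; apply: eq_bigr => f _.
  rewrite setIC (@stat_indep N _ (@outdegB X N) (fun m => (m < N)%N) HN (K_Hst HN) (N :: lS) lE _ f) //.
  - by rewrite mulrA mulrC.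
  - by apply/andP; split.
  - apply: detI.
      by apply: (@det_mono [:: N] [::]) => //[j|]; [rewrite !inE => ->|exact: det_Sev].
    by apply: (det_mono _ _ dH) => // j Hj; rewrite inE Hj orbT.
rewrite (pr_part P (fun p => mSev p tN) mH) -mulrA (mulrC _ (hF e)) mulrA.
by congr (_ * _); apply: eq_bigr => p _; rewrite setIC.
Qed.

Lemma fw_main n s y t z : (size s <= n)%N -> all (valid_edge tau) s -> all (lt_tau tau) t ->
  (forall i j, i \in t -> j \in s -> (i <= j)%N) ->
  pr (FA s y `&` SA t z) = (\prod_(i <- undup s) pr (Fev i (y i))) * pr (SA t z).
Proof.
elim: n s => [|n IH] s Hsz Hs Ht Hts.
  by move: Hsz; rewrite leqn0 size_eq0 => /eqP ->; rewrite FA_nil setTI big_nil mul1r.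
case: (eqVneq s [::]) => [->|sne]; first by rewrite FA_nil setTI big_nil mul1r.
have [N Ns HN] := ex_max sne.
set s' := seq.filter (predC1 N) s.
have HvN : valid_edge tau N by exact: (allP Hs).
have Hs' : all (valid_edge tau) s'.
  by apply/allP => i; rewrite mem_filter => /andP [_ Hi]; exact: (allP Hs).
have Hs'N i : i \in s' -> (i < N)%N.
  rewrite mem_filter => /andP [/= Hne Hi]; rewrite ltn_neqAle Hne.
  exact: (allP HN).
rewrite (FA_split y Ns) -setIA.
rewrite (@fw_step N (y N) (t ++ (s' ++ map succn s')) s'); first last.
- apply: detI.
    apply: (@det_mono (s' ++ map succn s') s'); last exact: FA_det.
      by move=> i Hi; rewrite mem_cat Hi orbT.
    by [].
  apply: (@det_mono t [::]); last exact: SA_det.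
    by move=> i Hi; rewrite mem_cat Hi.
  by [].
- exact: Hs'.
- by apply/allP => i /Hs'N.
- by rewrite all_cat Ht all_valid_tau.
- rewrite all_cat; apply/andP; split.
    by apply/allP => i Hi; exact: Hts.
  rewrite all_cat; apply/andP; split; apply/allP => j.
    by move/Hs'N/ltnW.
  by move/mapP => [i /Hs'N Hi ->].
- exact: HvN.
rewrite (IH s') //; last first.
  by move=> i j Hi; rewrite mem_filter => /andP [_ Hj]; exact: Hts.
  by rewrite -ltnS (leq_trans (size_rm Ns)).
have HF : pr (Fev N (y N)) = ((X N.+1)`!%:R)^-1 * hF (y N).
  have := @fw_step N (y N) [::] [::] setT HvN isT isT isT isT (fun _ _ _ _ _ => I).
  by rewrite setIT prT mulr1.
rewrite (perm_big _ (undup_rm Ns)) big_cons -HF.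
by rewrite !mulrA.
Qed.

End FW.

Section BW.
Hypothesis Hbw : backward_neutral P tau E.

Definition hB M (e : edges X M) : R :=
  \sum_(B : {set {set 'I_(X M.+1)}}) (gtB B e)%:R * pr [set w | sibship (E M w) = B].

Lemma X_Hst M : valid_edge tau M -> forall l a B, all (fun m => (M < m)%N) l ->
  all (valid_edge tau) l ->
  pr ([set w | sibship (E M w) = B] `&` EA l a) =
  pr [set w | sibship (E M w) = B] * pr (EA l a).
Proof.
move=> HM l a B Hl Hv.
have [_ hind] := Hbw HM.
have hK : [set w | sibship (E M w) = B] = [set w | forall i, i \in [:: M] ->
    sibship (E i w) = upd (fun i => (finset.set0 : {set {set 'I_(X i.+1)}})) B i].
  apply/seteqP; split => w /=.
    by move=> Hw i; rewrite inE => /eqP ->; rewrite upd_eq.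
  by move=> H; have := H M (mem_head _ _); rewrite upd_eq.
apply: indep_pr; [exact: mStat|exact: mEA|].
rewrite hK; apply: hind.
  by exists [:: M], (upd (fun i => (finset.set0 : {set {set 'I_(X i.+1)}})) B); split => //=; rewrite eqxx.
exists l, a; split => //.
by apply/allP => m Hm; apply/andP; split; [exact: (allP Hl m Hm)|exact: (allP Hv m Hm)].
Qed.

Lemma hB_reindex M (HM : valid_edge tau M) (q : {perm 'I_(X M.+1)}) e :
  \sum_(B : {set {set 'I_(X M.+1)}})
     (gtB (relabel_part q B) e)%:R * pr [set w | sibship (E M w) = B] = hB e.
Proof.
have hinj : injective (fun B => relabel_part (q^-1)%g B).
  exact: (can_inj (relabel_partK q)).
rewrite [LHS](reindex_inj hinj) /hB; apply: eq_bigr => B _; congr (_ * _).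
  by rewrite relabel_partK.
by rewrite /pr -((proj1 (Hbw HM)) (q^-1)%g B).
Qed.

Lemma bw_step M e lS lE H : valid_edge tau M -> all (fun i => (M < i)%N) lS ->
  all (lt_tau tau) lS -> all (fun i => (M < i)%N) lE -> all (valid_edge tau) lE ->
  det lS lE H ->
  pr (Fev M e `&` H) = ((X M)`!%:R)^-1 * hB e * pr H.
Proof.
move=> HM HlS1 HlS HlE1 HlE dH.
have tM := tau_of_valid HM.
have mH := det_meas HlS HlE dH.
set c := ((X M)`!%:R)^-1.
have step1 p q a : (relabel_edges p q a == e)%:R * pr (Sev M p `&` Sev M.+1 q `&` Eev M a `&` H)
   = (relabel_edges p q a == e)%:R * (c * pr ((Sev M.+1 q `&` H) `&` Eev M a)).
  congr (_ * _).
  rewrite (_ : Sev M p `&` Sev M.+1 q `&` Eev M a `&` H =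
               Sev M p `&` ((Sev M.+1 q `&` H) `&` Eev M a)); last first.
    by apply/seteqP; split => w /=; [case=> -[[? ?] ?] ?|case=> ? [[? ?] ?]].
  apply: (@fresh_sigma M p (M.+1 :: lS) (M :: lE)) => //.
  - rewrite inE negb_or; apply/andP; split; first by rewrite eqn_leq ltnn andbF.
    by apply/negP => /(allP HlS1); rewrite ltnn.
  - by apply/andP; split.
  - by rewrite /= HM HlE.
  - apply: detI; first apply: detI.
    + by apply: (@det_mono [:: M.+1] [::]) => //[j|]; [rewrite !inE => ->|exact: det_Sev].
    + by apply: (det_mono _ _ dH) => j Hj; rewrite inE Hj orbT.
    + by apply: (@det_mono [::] [:: M]) => //[j|]; [rewrite !inE => ->|exact: det_Eev].
rewrite triple //.
transitivity (\sum_(q : {perm 'I_(X M.+1)}) \sum_(a : edges X M)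
   (gB q a e)%:R * (c * pr ((Sev M.+1 q `&` H) `&` Eev M a))).
  rewrite exchange_big; apply: eq_bigr => q _; rewrite exchange_big; apply: eq_bigr => a _.
  rewrite /gB natr_sum mulr_suml; apply: eq_bigr => p _; exact: step1.
transitivity (c * \sum_(q : {perm 'I_(X M.+1)}) \sum_(B : {set {set 'I_(X M.+1)}})
   (gtB (relabel_part q B) e)%:R * pr ((Sev M.+1 q `&` H) `&` [set w | sibship (E M w) = B])).
  rewrite mulr_sumr; apply: eq_bigr => q _.
  have mSH : measurable (Sev M.+1 q `&` H) by apply: measurableI => //; exact: mSev.
  rewrite -(@grouping M _ (@sibship X M) (fun B => (gtB (relabel_part q B) e)%:R)) //.
  rewrite mulr_sumr; apply: eq_bigr => a _.
  case: (boolP (pub a)) => Ha; first by rewrite gB_eq // mulrCA.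
  by rewrite Eev_npu // setI0 pr0 !mulr0.
transitivity (c * (\sum_(q : {perm 'I_(X M.+1)}) pr (Sev M.+1 q `&` H)) * hB e).
  rewrite -mulrA; congr (_ * _); rewrite mulr_suml; apply: eq_bigr => q _.
  rewrite -(hB_reindex HM q) mulr_sumr; apply: eq_bigr => B _.
  rewrite setIC (@stat_indep M _ (@sibship X M) (fun m => (M < m)%N) HM (X_Hst HM) (M.+1 :: lS) lE _ B) //.
  - by rewrite mulrA mulrC.
  - by apply/andP; split.
  - apply: detI.
      by apply: (@det_mono [:: M.+1] [::]) => //[j|]; [rewrite !inE => ->|exact: det_Sev].
    by apply: (det_mono _ _ dH) => // j Hj; rewrite inE Hj orbT.
rewrite (pr_part P (fun q => mSev q HM) mH) -mulrA (mulrC _ (hB e)) mulrA.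
by congr (_ * _); apply: eq_bigr => q _; rewrite setIC.
Qed.

Lemma bw_main n s y t z : (size s <= n)%N -> all (valid_edge tau) s -> all (lt_tau tau) t ->
  (forall i j, i \in t -> j \in s -> (j < i)%N) ->
  pr (FA s y `&` SA t z) = (\prod_(i <- undup s) pr (Fev i (y i))) * pr (SA t z).
Proof.
elim: n s => [|n IH] s Hsz Hs Ht Hts.
  by move: Hsz; rewrite leqn0 size_eq0 => /eqP ->; rewrite FA_nil setTI big_nil mul1r.
case: (eqVneq s [::]) => [->|sne]; first by rewrite FA_nil setTI big_nil mul1r.
have [N Ns HN] := ex_min sne.
set s' := seq.filter (predC1 N) s.
have HvN : valid_edge tau N by exact: (allP Hs).
have Hs' : all (valid_edge tau) s'.
  by apply/allP => i; rewrite mem_filter => /andP [_ Hi]; exact: (allP Hs).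
have Hs'N i : i \in s' -> (N < i)%N.
  rewrite mem_filter => /andP [/= Hne Hi]; rewrite ltn_neqAle eq_sym Hne.
  exact: (allP HN).
rewrite (FA_split y Ns) -setIA.
rewrite (@bw_step N (y N) (t ++ (s' ++ map succn s')) s'); first last.
- apply: detI.
    apply: (@det_mono (s' ++ map succn s') s'); last exact: FA_det.
      by move=> i Hi; rewrite mem_cat Hi orbT.
    by [].
  apply: (@det_mono t [::]); last exact: SA_det.
    by move=> i Hi; rewrite mem_cat Hi.
  by [].
- exact: Hs'.
- by apply/allP => i /Hs'N.
- by rewrite all_cat Ht all_valid_tau.
- rewrite all_cat; apply/andP; split.
    by apply/allP => i Hi; exact: Hts.
  rewrite all_cat; apply/andP; split; apply/allP => j.
    by move/Hs'N.
  by move/mapP => [i /Hs'N Hi ->]; apply: (ltn_trans Hi).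
- exact: HvN.
rewrite (IH s') //; last first.
  by move=> i j Hi; rewrite mem_filter => /andP [_ Hj]; exact: Hts.
  by rewrite -ltnS (leq_trans (size_rm Ns)).
have HF : pr (Fev N (y N)) = ((X N)`!%:R)^-1 * hB (y N).
  have := @bw_step N (y N) [::] [::] setT HvN isT isT isT isT (fun _ _ _ _ _ => I).
  by rewrite setIT prT mulr1.
rewrite (perm_big _ (undup_rm Ns)) big_cons -HF.
by rewrite !mulrA.
Qed.

End BW.

Lemma eq_rel_shift m (p' p : {perm 'I_(X m)}) (q' q : {perm 'I_(X m.+1)}) (a e : edges X m) :
  (relabel_edges p' q' a == relabel_edges p q e) =
  (relabel_edges (p' * p^-1)%g (q' * q^-1)%g a == e).
Proof.
rewrite -(inj_eq (@rel_inj X m (p^-1)%g (q^-1)%g)) !rel_comp !mulgV rel_id //.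
Qed.

Lemma Fev_exch n (Hn : valid_edge tau n) p q e :
  pr (Fev n e) = pr (Fev n (relabel_edges p q e)).
Proof.
have tn := tau_of_valid Hn.
set cc := ((X n)`!%:R)^-1 * ((X n.+1)`!%:R)^-1 : R.
have key e' : pr (Fev n e') = \sum_(p' : {perm 'I_(X n)}) \sum_(q' : {perm 'I_(X n.+1)})
   \sum_(a : edges X n) (relabel_edges p' q' a == e')%:R * (cc * pr (Eev n a)).
  rewrite -(setIT (Fev n e')) triple //; apply: eq_bigr => p' _; apply: eq_bigr => q' _.
  apply: eq_bigr => a _; congr (_ * _).
  rewrite setIT -setIA (@fresh_sigma n p' [:: n.+1] [:: n]) //.
  - rewrite (@fresh_sigma n.+1 q' [::] [:: n]) // ?mulrA //.
      by apply/andP; split.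
    exact: det_Eev.
  - by rewrite inE eqn_leq ltnn andbF.
  - by apply/andP; split.
  - by apply/andP; split.
  - apply: detI.
      by apply: (@det_mono [:: n.+1] [::]) => //; exact: det_Sev.
    by apply: (@det_mono [::] [:: n]) => //; exact: det_Eev.
rewrite !key [RHS](reindex_inj (mulIg p)); apply: eq_bigr => p' _.
rewrite [RHS](reindex_inj (mulIg q)); apply: eq_bigr => q' _.
apply: eq_bigr => a _; by rewrite eq_rel_shift !mulgK.
Qed.

Lemma mFA s y : all (valid_edge tau) s -> measurable (FA s y).
Proof. by move=> Hs; apply: (det_meas (all_valid_tau Hs) Hs); exact: FA_det. Qed.

Lemma mFev m e : valid_edge tau m -> measurable (Fev m e).
Proof.
move=> Hm; apply: (det_meas (lS := [:: m; m.+1]) (lE := [:: m])); last exact: Fev_det.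
  by rewrite /= tau_of_valid //; move: Hm; rewrite /valid_edge => ->.
by rewrite /= Hm.
Qed.

Lemma main_all : forward_neutral P tau E \/ backward_neutral P tau E ->
  [/\ completely_neutral P tau (perm_edges sigma E),
      forward_neutral P tau E ->
        forall n, indep_fam P
          (fdd_events (perm_edges sigma E)
             (fun m => (n <= m)%N && valid_edge tau m))
          (fdd_events sigma (fun m => (m <= n)%N && lt_tau tau m))
    & backward_neutral P tau E ->
        forall n, indep_fam P
          (fdd_events (perm_edges sigma E)
             (fun m => (m < n)%N && valid_edge tau m))
          (fdd_events sigma (fun m => (n <= m)%N && lt_tau tau m))].
Proof.
move=> Hfb; split.
- split.
    move=> s y us Hs.
    have h0 : forall i j, i \in [::] -> j \in s -> (i <= j)%N by [].
    have h0' : forall i j, i \in [::] -> j \in s -> (j < i)%N by [].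
    have Hpr : pr (FA s y) = \prod_(i <- s) pr (Fev i (y i)).
      case: Hfb => [Hfw|Hbw].
        have := @fw_main Hfw (size s) s y [::] (fun i => 1%g) (leqnn _) Hs isT h0.
        by rewrite SA_nil setIT prT mulr1 undup_id.
      have := @bw_main Hbw (size s) s y [::] (fun i => 1%g) (leqnn _) Hs isT h0'.
      by rewrite SA_nil setIT prT mulr1 undup_id.
    rewrite (prE P (mFA y Hs)) Hpr -prodEFin; apply: eq_big_seq => i Hi.
    by rewrite -prE //; apply: mFev; exact: (allP Hs).
  move=> n Hn p q e.
  by rewrite (prE P (mFev _ Hn)) (prE P (mFev _ Hn)) -Fev_exch.
- move=> Hfw n a b [s [y [Hs ->]]] [t [z [Ht ->]]].
  have Hs1 : all (valid_edge tau) s by apply/allP => i /(allP Hs) /andP [].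
  have Ht1 : all (lt_tau tau) t by apply/allP => i /(allP Ht) /andP [].
  have Hts : forall i j, i \in t -> j \in s -> (i <= j)%N.
    move=> i j /(allP Ht) /andP [Hi _] /(allP Hs) /andP [Hj _]; exact: leq_trans Hi Hj.
  have h0 : forall i j, i \in [::] -> j \in s -> (i <= j)%N by [].
  have h := @fw_main Hfw (size s) s y t z (leqnn _) Hs1 Ht1 Hts.
  have h' := @fw_main Hfw (size s) s y [::] z (leqnn _) Hs1 isT h0.
  rewrite SA_nil setIT prT mulr1 in h'.
  have mSA' := mSA z Ht1.
  rewrite (prE P (measurableI _ _ (mFA y Hs1) mSA')) (prE P (mFA y Hs1)) (prE P mSA').
  by rewrite -EFinM h h'.
- move=> Hbw n a b [s [y [Hs ->]]] [t [z [Ht ->]]].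
  have Hs1 : all (valid_edge tau) s by apply/allP => i /(allP Hs) /andP [].
  have Ht1 : all (lt_tau tau) t by apply/allP => i /(allP Ht) /andP [].
  have Hts : forall i j, i \in t -> j \in s -> (j < i)%N.
    move=> i j /(allP Ht) /andP [Hi _] /(allP Hs) /andP [Hj _]; exact: leq_trans Hj Hi.
  have h0 : forall i j, i \in [::] -> j \in s -> (j < i)%N by [].
  have h := @bw_main Hbw (size s) s y t z (leqnn _) Hs1 Ht1 Hts.
  have h' := @bw_main Hbw (size s) s y [::] z (leqnn _) Hs1 isT h0.
  rewrite SA_nil setIT prT mulr1 in h'.
  have mSA' := mSA z Ht1.
  rewrite (prE P (measurableI _ _ (mFA y Hs1) mSA')) (prE P (mFA y Hs1)) (prE P mSA').
  by rewrite -EFinM h h'.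
Qed.

End Gen.

Close Scope ring_scope.
Close Scope classical_set_scope.
Theorem theorem3p2 (d : measure_display) (Omega : measurableType d)
  (R : realType) (P : probability Omega R)
  (tau : option nat) (X : nat -> nat) (k : forall n, 'I_(X n) -> nat)
  (E : forall n, Omega -> edges X n)
  (sigma : forall n, Omega -> {perm 'I_(X n)}) :
  (forall n, lt_tau tau n -> (0 < X n)%N) ->
  (forall n, lt_tau tau n.+1 -> (\sum_(i < X n) k n i)%N = X n.+1) ->
  discrete_rv E (valid_edge tau) ->
  discrete_rv sigma (lt_tau tau) ->
  genealogy_model tau k E ->
  forward_neutral P tau E \/ backward_neutral P tau E ->
  uniform_perms P tau sigma ->
  indep_fam P (fdd_events sigma (lt_tau tau)) (fdd_events E (valid_edge tau)) ->
  [/\ completely_neutral P tau (perm_edges sigma E),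
      forward_neutral P tau E ->
        forall n, indep_fam P
          (fdd_events (perm_edges sigma E)
             (fun m => (n <= m)%N && valid_edge tau m))
          (fdd_events sigma (fun m => (m <= n)%N && lt_tau tau m))
    & backward_neutral P tau E ->
        forall n, indep_fam P
          (fdd_events (perm_edges sigma E)
             (fun m => (m < n)%N && valid_edge tau m))
          (fdd_events sigma (fun m => (n <= m)%N && lt_tau tau m))].
Proof.
move=> _ _ HE HS Hgen Hfb Hunif Hind.
exact: (main_all HE HS Hgen Hunif Hind Hfb).
Qed.
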